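(* Consider the clique inference problem with nonnegative vertex potentials and the Potts clique potential $C(\mathbf{v})=\lambda\sum_{v\in V}n_v(\mathbf{v})^2$ with $\lambda>0$. Let $\hat{\mathbf{v}}$ be the assignment returned by the $\alpha$-pass algorithm and $\mathbf{v}^*$ an assignment maximizing $F$. Then $F(\hat{\mathbf{v}})\ge\frac{4}{5}F(\mathbf{v}^* )$.
   Context: Clique inference problem: there are $n$ vertices $1,\dots,n$, a finite set $V$ of values ($|V|\ge 2$), real vertex potentials $\psi_{jv}$ ($1\le j\le n$, $v\in V$), and a clique potential $C$ depending only on the counts $n_v(\mathbf{v})=|\{j:v_j=v\}|$. The objective is $F(\mathbf{v})=\sum_{j=1}^n\psi_{jv_j}+C(\mathbf{v})$ over $\mathbf{v}\in V^n$. The $\alpha$-pass algorithm: for each $\alpha\in V$, sort the vertices in decreasing order of $\psi_{j\alpha}-\max_{v\neq\alpha}\psi_{jv}$; for each $k\in\{1,\dots,n\}$ form the assignment giving the first $k$ sorted vertices the value $\alpha$ and every other vertex a value $v\ne\alpha$ maximizing $\psi_{jv}$; output the formed assignment with the largest $F$ over all $\alpha$ and $k$. *)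

(* Defs.v *)
From HB Require Import structures.
From mathcomp Require Import all_boot all_order all_algebra all_fingroup.
Set Implicit Arguments. Unset Strict Implicit. Unset Printing Implicit Defensive.
Import Order.TTheory GRing.Theory Num.Theory.
Local Open Scope ring_scope.

Section CliqueInference.
Variables (R : realFieldType) (V : finType) (n : nat).

Definition assignment := {ffun 'I_n -> V}.

Definition nval (a : assignment) (v : V) : nat := #|[set j | a j == v]|.

Definition potts (lam : R) (a : assignment) : R :=
  lam * \sum_(v : V) ((nval a v)%:R ^+ 2).

Definition Fobj (psi : 'I_n -> V -> R) (lam : R) (a : assignment) : R :=
  \sum_(j < n) psi j (a j) + potts lam a.

Definition best_other (psi : 'I_n -> V -> R) (alpha : V) (b : 'I_n -> V) :=
  forall j, b j != alpha /\ (forall v, v != alpha -> psi j v <= psi j (b j)).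

(* sort key psi_{j alpha} - max_{v <> alpha} psi_{j v}, with the max realised by b *)
Definition akey (psi : 'I_n -> V -> R) (alpha : V) (b : 'I_n -> V) (j : 'I_n) : R :=
  psi j alpha - psi j (b j).

Definition sorted_decr (psi : 'I_n -> V -> R) (alpha : V) (b : 'I_n -> V)
  (s : {perm 'I_n}) :=
  forall i i' : 'I_n, (i < i')%N -> akey psi alpha b (s i') <= akey psi alpha b (s i).

(* first k sorted vertices get alpha, the others their best non-alpha value *)
Definition formed (alpha : V) (b : 'I_n -> V) (s : {perm 'I_n}) (k : nat)
  : assignment := [ffun j => if (nat_of_ord ((s^-1)%g j) < k)%N then alpha else b j].

(* vhat is a possible output of the alpha-pass algorithm (any tie-breaking) *)
Definition alpha_pass_output (psi : 'I_n -> V -> R) (lam : R) (vhat : assignment) :=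
  exists (B : V -> 'I_n -> V) (S : V -> {perm 'I_n}),
    (forall alpha, best_other psi alpha (B alpha) /\ sorted_decr psi alpha (B alpha) (S alpha))
    /\ (exists alpha k, (1 <= k <= n)%N /\ vhat = formed alpha (B alpha) (S alpha) k)
    /\ (forall alpha k, (1 <= k <= n)%N ->
          Fobj psi lam (formed alpha (B alpha) (S alpha) k) <= Fobj psi lam vhat).

End CliqueInference.

(* Main.v *)
Require Import Defs.
From HB Require Import structures.
From mathcomp Require Import all_boot all_order all_algebra all_fingroup.
Import Order.TTheory GRing.Theory Num.Theory.
Local Open Scope ring_scope.

Section Aux.
Variables (R : realFieldType) (V : finType) (n : nat).

Lemma card_lt (m k : nat) : (k <= m)%N -> #|[set i : 'I_m | (i < k)%N]| = k.
Proof.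
move=> kn; rewrite -sum1_card.
rewrite (eq_bigl (fun i : 'I_m => (i < k)%N)); last by move=> i; rewrite inE.
by rewrite (big_ord_narrow kn) sum1_card card_ord.
Qed.

Lemma card_L (s : {perm 'I_n}) (k : nat) : (k <= n)%N ->
  #|[set j : 'I_n | ((s^-1)%g j < k)%N]| = k.
Proof.
move=> kn; rewrite -[RHS](@card_lt n k kn) -[RHS](card_preimset _ (@perm_inj _ (s^-1)%g)).
by apply: eq_card => j; rewrite !inE.
Qed.

Lemma nval_sum (a : assignment V n) : (\sum_(v : V) nval a v)%N = n.
Proof.
rewrite /nval.
under eq_bigr do rewrite -sum1_card.
rewrite (exchange_big_dep predT) //=.
rewrite -[RHS]card_ord -sum1_card; apply: eq_bigr => j _.
rewrite (bigD1 (a j)) ?inE ?eqxx //= big1 ?addn0 // => v /andP[].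
by rewrite inE => /eqP -> ; rewrite eqxx.
Qed.

Lemma nval_le (a : assignment V n) v : (nval a v <= n)%N.
Proof. by rewrite /nval -[X in (_ <= X)%N]card_ord max_card. Qed.

Variable psi : 'I_n -> V -> R.

Lemma vertex_formed alpha b s k : best_other psi alpha b ->
  \sum_(j < n) psi j (formed alpha b s k j) =
  \sum_(j < n) psi j (b j) + \sum_(j in [set j : 'I_n | ((s^-1)%g j < k)%N]) akey psi alpha b j.
Proof.
move=> _; rewrite [X in _ + X]big_mkcond /= -big_split /=; apply: eq_bigr => j _.
rewrite /formed ffunE inE /akey; case: ifP => _; last by rewrite addr0.
by rewrite addrC subrK.
Qed.

Lemma vertex_le alpha b (a : assignment V n) : best_other psi alpha b ->
  \sum_(j < n) psi j (a j) <=
  \sum_(j < n) psi j (b j) + \sum_(j in [set j : 'I_n | a j == alpha]) akey psi alpha b j.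
Proof.
move=> hb; rewrite [X in _ + X]big_mkcond /= -big_split /=; apply: ler_sum => j _.
rewrite inE /akey; case: eqP => [->|ne]; first by rewrite addrC subrK.
by rewrite addr0; apply: (hb j).2; apply/eqP.
Qed.

Lemma exchange alpha b s k (A : {set 'I_n}) : sorted_decr psi alpha b s ->
  (1 <= k <= n)%N -> #|A| = k ->
  \sum_(j in A) akey psi alpha b j <=
  \sum_(j in [set j : 'I_n | ((s^-1)%g j < k)%N]) akey psi alpha b j.
Proof.
move=> hs /andP[k1 kn] cA.
set L := [set j : 'I_n | ((s^-1)%g j < k)%N].
have kn' : (k.-1 < n)%N by rewrite prednK.
set c := akey psi alpha b (s (Ordinal kn')).
have hL : forall j, j \in L -> c <= akey psi alpha b j.
  move=> j; rewrite inE => jk.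
  have -> : j = s ((s^-1)%g j) by rewrite permKV.
  rewrite /c; have := ltnSE (leq_trans jk (leqSpred k)).
  rewrite leq_eqVlt => /orP[/eqP e| lt]; last exact: hs.
  by have -> : Ordinal kn' = (s^-1)%g j by apply: val_inj; rewrite /= e.
have hN : forall j, j \notin L -> akey psi alpha b j <= c.
  move=> j; rewrite inE -leqNgt => jk.
  have -> : j = s ((s^-1)%g j) by rewrite permKV.
  apply: hs => /=; by rewrite (leq_trans _ jk) // prednK.
rewrite (big_setID L) [X in _ <= X](big_setID A) /= setIC.
rewrite lerD2l.
have eqc : #|A :\: L| = #|L :\: A|.
  by rewrite !cardsD setIC cA card_L.
apply: (@le_trans _ _ (#|A :\: L|%:R * c)).
  rewrite -sum1_card natr_sum mulr_suml; apply: ler_sum => j.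
  by rewrite inE => /andP[/hN h _]; rewrite mul1r.
rewrite eqc -sum1_card natr_sum mulr_suml; apply: ler_sum => j.
by rewrite inE => /andP[_ /hL h]; rewrite mul1r.
Qed.

Lemma nval_formed alpha b (s : {perm 'I_n}) k : best_other psi alpha b -> (k <= n)%N ->
  nval (formed alpha b s k) alpha = k.
Proof.
move=> hb kn; rewrite /nval -[RHS](card_L s k kn); apply: eq_card => j; rewrite !inE /formed ffunE.
by case: ifP; rewrite ?eqxx // => _; apply/negbTE; exact: (hb j).1.
Qed.

End Aux.

From mathcomp Require Import lra.

Theorem theorem3 (R : realFieldType) (V : finType) (n : nat)
  (psi : 'I_n -> V -> R) (lam : R) :
  (1 < #|V|)%N ->
  (forall j v, 0 <= psi j v) ->
  0 < lam ->
  forall vhat vstar : assignment V n,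
    alpha_pass_output psi lam vhat ->
    (forall a : assignment V n, Fobj psi lam a <= Fobj psi lam vstar) ->
    4 / 5 * Fobj psi lam vstar <= Fobj psi lam vhat.
Proof.
move=> _ psi0 lam0 vhat vstar [B [S [HBS [[a0 [k0 [hk0 _]]] Hmax]]]] _.
have n0 : (0 < n)%N by case/andP: hk0 => h1 h2; exact: leq_trans h1 h2.
pose j0 : 'I_n := Ordinal n0.
case: (@arg_maxnP V (vstar j0) predT (nval vstar) isT) => al _ almax.
set m := nval vstar al.
have m1 : (1 <= m)%N.
  apply: leq_trans (almax (vstar j0) isT).
  by apply/card_gt0P; exists j0; rewrite inE.
have mn : (m <= n)%N by apply: nval_le.
have [hb hs] := HBS al.
set b := B al in hb hs; set s := S al in hs.
have H1 := Hmax al m (introT andP (conj m1 mn)).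
have H2 := Hmax al n (introT andP (conj n0 (leqnn n))).
rewrite -/b -/s in H1 H2.
have sqge : forall a : assignment V n, (nval a al)%:R ^+ 2 <= \sum_(v : V) ((nval a v)%:R ^+ 2 : R).
  move=> a; rewrite (bigD1 al) //= lerDl; apply: sumr_ge0 => v _; exact: sqr_ge0.
have Hvert : \sum_(j < n) psi j (vstar j) <= \sum_(j < n) psi j (formed al b s m j).
  rewrite (@vertex_formed _ _ _ psi al b s m hb); apply: le_trans (@vertex_le _ _ _ psi al b vstar hb) _.
  by rewrite lerD2l; apply: exchange => //; rewrite m1 mn.
have HFm : \sum_(j < n) psi j (vstar j) + lam * m%:R ^+ 2 <= Fobj psi lam vhat.
  apply: le_trans H1; rewrite /Fobj /potts lerD //.
  by rewrite ler_pM2l // -{1}(@nval_formed _ _ _ psi al b s m hb mn); apply: sqge.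
have HFn : lam * n%:R ^+ 2 <= Fobj psi lam vhat.
  apply: le_trans H2; rewrite /Fobj /potts -[X in X <= _]add0r lerD //.
    by apply: sumr_ge0 => j _.
  by rewrite ler_pM2l // -{1}(@nval_formed _ _ _ psi al b s n hb (leqnn n)); apply: sqge.
have Hpot : potts lam vstar <= lam * (m%:R * n%:R).
  have e : (n%:R : R) = \sum_(v : V) (nval vstar v)%:R by rewrite -natr_sum nval_sum.
  rewrite /potts ler_pM2l // e mulr_sumr.
  apply: ler_sum => v _; rewrite expr2 ler_wpM2r // ler_nat; exact: almax.
have hsq : 0 <= lam * (n%:R - 2 * m%:R) ^+ 2 by apply: mulr_ge0; [exact: ltW | exact: sqr_ge0].
move: HFm HFn Hpot hsq; rewrite /Fobj.
set P := \sum_(j < n) psi j (vstar j); set Fh := Fobj psi lam vhat.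
set C := potts lam vstar; set x : R := m%:R; set y : R := n%:R.
move=> HFm HFn Hpot hsq.
nra.
Qed.
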